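(* For every $n\ge 3$, $\chi'_{qm\Sigma}(K_n)=3$.
   Context: A $k$-edge-coloring of $G$ is any map $c:E(G)\to\{1,\dots,k\}$ (adjacent edges may share colors). It induces $\sigma_c(v)=\sum_{u\in N(v)}c(vu)$. The coloring is neighbor sum distinguishing (NSD) if $\sigma_c(u)\ne\sigma_c(v)$ for every edge $uv$. It is quasi-majority if every vertex $v$ is incident to at most $\lceil d(v)/2\rceil$ edges of each single color. $\chi'_{qm\Sigma}(G)$ denotes the least $k$ such that $G$ has a $k$-edge-coloring that is both quasi-majority and NSD. *)

(* Defs.v *)
From mathcomp Require Import all_boot.
Set Implicit Arguments. Unset Strict Implicit. Unset Printing Implicit Defensive.

Definition simple_graph (T : finType) (e : rel T) : Prop :=
  (forall u v, e u v = e v u) /\ (forall u, ~~ e u u).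

Definition Kn_adj (n : nat) : rel 'I_n := fun u v => u != v.

(* An edge-coloring with colours 1..k, represented as a symmetric function
   c u v giving the colour of the edge uv (values on non-edges irrelevant). *)
Definition is_k_edge_coloring (T : finType) (e : rel T) (k : nat)
    (c : T -> T -> nat) : Prop :=
  forall u v, e u v -> [/\ c u v = c v u, 1 <= c u v & c u v <= k].

Definition deg (T : finType) (e : rel T) (v : T) : nat := #|[set u | e v u]|.

Definition sigma (T : finType) (e : rel T) (c : T -> T -> nat) (v : T) : nat :=
  \sum_(u | e v u) c v u.

Definition nsd (T : finType) (e : rel T) (c : T -> T -> nat) : Prop :=
  forall u v, e u v -> sigma e c u <> sigma e c v.

Definition quasi_majority (T : finType) (e : rel T) (c : T -> T -> nat) : Prop :=
  forall (v : T) (col : nat),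
    #|[set u | e v u & c v u == col]| <= uphalf (deg e v).

Definition has_qm_nsd_coloring (T : finType) (e : rel T) (k : nat) : Prop :=
  exists c : T -> T -> nat,
    [/\ is_k_edge_coloring e k c, quasi_majority e c & nsd e c].

Definition chi_qm_sigma_eq (T : finType) (e : rel T) (k : nat) : Prop :=
  has_qm_nsd_coloring e k /\ (forall j, j < k -> ~ has_qm_nsd_coloring e j).

(* Main.v *)
Require Import Defs.
From mathcomp Require Import all_boot.
From mathcomp Require Import zify.

Lemma card_Kn n (v : 'I_n) (P : nat -> bool) :
  #|[set u : 'I_n | Kn_adj v u & P u]| = \sum_(0 <= u < n) ((u != v :> nat) && P u : nat).
Proof.
rewrite -sum1dep_card big_mkcond big_mkord /=; apply: eq_bigr => u _.
by rewrite /Kn_adj /= eq_sym; case: (_ && _).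
Qed.

Lemma sigma_Kn n (f : nat -> nat -> nat) (v : 'I_n) :
  sigma (@Kn_adj n) (fun x y : 'I_n => f x y) v = \sum_(0 <= u < n) ((u != v :> nat) * f v u).
Proof.
rewrite /sigma big_mkcond big_mkord /=; apply: eq_bigr => u _.
by rewrite /Kn_adj /= eq_sym; case: (_ != _); rewrite ?mul1n ?mul0n.
Qed.

Lemma sum_odd b p : \sum_(0 <= u < b) (odd (u + p) : nat) = (b + odd p)./2.
Proof.
elim: b => [|b IH]; first by rewrite big_nil; case: (odd p).
rewrite big_nat_recr //= IH; lia.
Qed.

Lemma sum_cut N t (P : nat -> bool) : t <= N ->
  \sum_(0 <= u < N) (P u && (u < t) : nat) = \sum_(0 <= u < t) (P u : nat).
Proof.
move=> tN; rewrite (@big_cat_nat _ _ _ t 0 N _ _ (leq0n t) tN) /=.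
rewrite [X in _ + X]big_nat_cond [X in _ + X]big1 ?addn0.
  by apply: eq_big_nat => u /andP[_ ->]; rewrite andbT.
by move=> u /andP[/andP[]]; rewrite leqNgt => /negbTE -> _; rewrite andbF.
Qed.

Lemma sum_lt N t : t <= N -> \sum_(0 <= u < N) (u < t : nat) = t.
Proof.
move=> tN; have := @sum_cut N t (fun _ => true) tN; rewrite /= => ->.
by rewrite sum_nat_const_nat muln1 subn0.
Qed.

Definition bs m v u := if odd (v + u) then (if v + u < 2 * m then 1 else 3) else 2.

Ltac pw := move=> ? /andP[? ?]; rewrite /bs; repeat (case: ifP => ?); lia.

Definition bcnt m v k :=
  let s1 := (2 * m - v + odd v)./2 in let so := (2 * m + 1 + odd v)./2 in
  if k == 1 then s1 else if k == 2 then 2 * m - so else if k == 3 then so - s1 else 0.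

Lemma base_c1 m v : v < 2 * m + 1 ->
  \sum_(0 <= u < 2 * m + 1) ((u != v) && (bs m v u == 1) : nat) = (2 * m - v + odd v)./2.
Proof.
move=> hv.
rewrite (eq_big_nat _ _ (F2 := fun u => (odd (u + v) && (u < 2 * m - v) : nat))); last pw.
by rewrite sum_cut ?sum_odd //; lia.
Qed.

Lemma base_c3 m v : v < 2 * m + 1 ->
  \sum_(0 <= u < 2 * m + 1) ((u != v) && (bs m v u == 3) : nat) =
   (2 * m + 1 + odd v)./2 - (2 * m - v + odd v)./2.
Proof.
move=> hv; rewrite -sum_odd -(base_c1 m v hv).
have -> : \sum_(0 <= u < 2 * m + 1) (odd (u + v) : nat) =
  \sum_(0 <= u < 2 * m + 1) (((u != v) && (bs m v u == 1) : nat) + ((u != v) && (bs m v u == 3) : nat)).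
  by apply: eq_big_nat; pw.
by rewrite big_split /= addKn.
Qed.

Lemma base_c2 m v : v < 2 * m + 1 ->
  \sum_(0 <= u < 2 * m + 1) ((u != v) && (bs m v u == 2) : nat) =
   2 * m - (2 * m + 1 + odd v)./2.
Proof.
move=> hv.
have H : \sum_(0 <= u < 2 * m + 1) (((u != v) && (bs m v u == 2) : nat) + (odd (u + v) : nat) + (u < v.+1 : nat))
   = \sum_(0 <= u < 2 * m + 1) (1 + (u < v : nat)).
  by apply: eq_big_nat; pw.
move: H; rewrite !big_split /= sum_odd !sum_lt ?sum_nat_const_nat; try lia.
Qed.

Lemma base_cnt m v k : v < 2 * m + 1 ->
  \sum_(0 <= u < 2 * m + 1) ((u != v) && (bs m v u == k) : nat) = bcnt m v k.
Proof.
move=> hv; case: k => [|[|[|[|k]]]]; rewrite /bcnt /=.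
- by rewrite big1_seq // => u _; rewrite /bs; repeat case: ifP; rewrite andbF.
- exact: base_c1.
- exact: base_c2.
- exact: base_c3.
- by rewrite big1_seq // => u _; rewrite /bs; repeat case: ifP; rewrite andbF.
Qed.

Lemma base_sig m v : v < 2 * m + 1 ->
  \sum_(0 <= u < 2 * m + 1) ((u != v) * bs m v u) =
   bcnt m v 1 + 2 * bcnt m v 2 + 3 * bcnt m v 3.
Proof.
move=> hv; rewrite -!(base_cnt m v _ hv) !big_distrr -!big_split /=.
by apply: eq_big_nat; pw.
Qed.


Definition hm n := (if odd n then n else n.-1)./2.
Definition wc m u := if u < m then 1 else if u < m + 2 then 2 else 3.
Definition col n v u :=
  if odd n then bs (hm n) v u
  else if v == n.-1 then wc (hm n) u
  else if u == n.-1 then wc (hm n) v else bs (hm n) v u.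
Definition wcnt m k := if k == 1 then m else if k == 2 then 2 else if k == 3 then m - 1 else 0.
Definition ccnt n v k :=
  if odd n then bcnt (hm n) v k
  else if v == n.-1 then wcnt (hm n) k
  else bcnt (hm n) v k + (wc (hm n) v == k).

Lemma wc_cnt m k : 1 <= m ->
  \sum_(0 <= u < 2 * m + 1) ((u != 2 * m + 1) && (wc m u == k) : nat) = wcnt m k.
Proof.
move=> hm; case: k => [|[|[|[|k]]]]; rewrite /wcnt /=.
- by rewrite big1_seq // => u _; rewrite /wc; repeat case: ifP; rewrite andbF.
- rewrite (eq_big_nat _ _ (F2 := fun u => (u < m : nat))); last first.
    by move=> u /andP[_ hu]; rewrite /wc; repeat case: ifP => ?; lia.
  by rewrite sum_lt //; lia.
- have H : \sum_(0 <= u < 2 * m + 1) (((u != 2 * m + 1) && (wc m u == 2) : nat) + (u < m : nat))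
     = \sum_(0 <= u < 2 * m + 1) (u < m + 2 : nat).
    by apply: eq_big_nat => u /andP[_ hu]; rewrite /wc; repeat case: ifP => ?; lia.
  move: H; rewrite big_split /= !sum_lt; lia.
- have H : \sum_(0 <= u < 2 * m + 1) (((u != 2 * m + 1) && (wc m u == 3) : nat) + (u < m + 2 : nat))
     = \sum_(0 <= u < 2 * m + 1) 1.
    by apply: eq_big_nat => u /andP[_ hu]; rewrite /wc; repeat case: ifP => ?; lia.
  move: H; rewrite big_split /= !sum_lt ?sum_nat_const_nat; lia.
- by rewrite big1_seq // => u _; rewrite /wc; repeat case: ifP; rewrite andbF.
Qed.

Lemma cnt_col n v k : 3 <= n -> v < n ->
  \sum_(0 <= u < n) ((u != v) && (col n v u == k) : nat) = ccnt n v k.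
Proof.
move=> n3 vn; rewrite /ccnt; case: ifP => on.
  have En : n = 2 * hm n + 1 by rewrite /hm on; lia.
  rewrite (eq_big_nat _ _ (F2 := fun u => ((u != v) && (bs (hm n) v u == k) : nat))); last first.
    by move=> u _; rewrite /col on.
  move: (hm n) En => m En; rewrite En in vn *; exact: base_cnt.
have En : n = (2 * hm n + 1).+1 by rewrite /hm on; lia.
have m1 : 1 <= hm n by rewrite /hm on; lia.
case: ifP => vl.
  have Ev : v = 2 * hm n + 1 by lia.
  rewrite {1}En big_nat_recr //= -Ev eqxx /= addn0 {1}Ev.
  rewrite (eq_big_nat _ _ (F2 := fun u => ((u != 2 * hm n + 1) && (wc (hm n) u == k) : nat))).
    exact: wc_cnt.
  by move=> u /andP[_ hu]; rewrite /col on /= vl -Ev.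
rewrite {1}En big_nat_recr //=.
have -> : col n v (2 * hm n + 1) = wc (hm n) v.
  by rewrite /col on /= vl; case: eqP => //; lia.
have -> : (2 * hm n + 1 != v) = true by lia.
rewrite (eq_big_nat _ _ (F2 := fun u => ((u != v) && (bs (hm n) v u == k) : nat))); last first.
  move=> u /andP[_ hu]; rewrite /col on /= vl.
  by have -> : (u == n.-1) = false by apply/eqP; lia.
rewrite (base_cnt (hm n) v k) //; lia.
Qed.

Lemma sum123 N (P : nat -> bool) f : (forall u, 1 <= f u <= 3) ->
  \sum_(0 <= u < N) (P u * f u) =
  \sum_(0 <= u < N) (P u && (f u == 1) : nat) + 2 * \sum_(0 <= u < N) (P u && (f u == 2) : nat)
  + 3 * \sum_(0 <= u < N) (P u && (f u == 3) : nat).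
Proof.
move=> H; rewrite !big_distrr -!big_split /=; apply: eq_big_nat => u _.
by have := H u; case: (P u); lia.
Qed.

Lemma col_rng n v u : 1 <= col n v u <= 3.
Proof. by rewrite /col /bs /wc; repeat case: ifP. Qed.

Lemma sig_col n v : 3 <= n -> v < n ->
  \sum_(0 <= u < n) ((u != v) * col n v u) = ccnt n v 1 + 2 * ccnt n v 2 + 3 * ccnt n v 3.
Proof.
move=> n3 vn; rewrite sum123; last exact: col_rng.
by rewrite !cnt_col.
Qed.

Lemma bS m v : v < 2 * m + 1 -> bcnt m v 1 + 2 * bcnt m v 2 + 3 * bcnt m v 3 = 3 * m + v.
Proof. move=> hv; rewrite /bcnt /=; lia. Qed.

Definition S n v := ccnt n v 1 + 2 * ccnt n v 2 + 3 * ccnt n v 3.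

Lemma hm_odd n : odd n -> n = 2 * hm n + 1.
Proof. by move=> on; rewrite /hm on; lia. Qed.
Lemma hm_even n : ~~ odd n -> 3 <= n -> n = 2 * hm n + 2 /\ 1 <= hm n.
Proof. by move=> on n3; rewrite /hm (negbTE on); lia. Qed.

Lemma S_odd n v : odd n -> v < n -> S n v = 3 * hm n + v.
Proof.
move=> on vn; rewrite /S /ccnt on; apply: bS.
by rewrite -hm_odd.
Qed.

Lemma S_w n : ~~ odd n -> 3 <= n -> S n n.-1 = 4 * hm n + 1.
Proof.
move=> on n3; have [E m1] := @hm_even n on n3.
rewrite /S /ccnt (negbTE on) eqxx /wcnt /=.
move: (hm n) m1 => m m1; lia.
Qed.

Lemma S_ev n v : ~~ odd n -> 3 <= n -> v < n.-1 -> S n v = 3 * hm n + v + wc (hm n) v.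
Proof.
move=> on n3 vn; have [E m1] := @hm_even n on n3.
have vn' : v < 2 * hm n + 1 by lia.
have hv : (v == n.-1) = false by apply/eqP; lia.
rewrite /S /ccnt (negbTE on) hv.
have := @bS (hm n) v vn'.
move: (hm n) m1 vn' => m m1 vn'.
rewrite /wc; repeat (case: ifP => ?); rewrite /=; lia.
Qed.

Lemma S_inj n u v : 3 <= n -> u < n -> v < n -> u != v -> S n u != S n v.
Proof.
move=> n3 un vn uv; case on: (odd n).
  by rewrite !S_odd //; lia.
have on' : ~~ odd n by rewrite on.
have [E m1] := @hm_even n on' n3.
have [Hu|Hu] : u = n.-1 \/ u < n.-1 by lia.
  have Hv : v < n.-1 by lia.
  rewrite Hu S_w // S_ev //.
  move: (hm n) m1 E Hv => m m1 E Hv.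
  rewrite /wc; repeat (case: ifP => ?); lia.
have [Hv|Hv] : v = n.-1 \/ v < n.-1 by lia.
  rewrite Hv S_w // S_ev //.
  move: (hm n) m1 E Hu => m m1 E Hu.
  rewrite /wc; repeat (case: ifP => ?); lia.
rewrite !S_ev //.
move: (hm n) m1 E Hu Hv => m m1 E Hu Hv.
rewrite /wc; repeat (case: ifP => ?); lia.
Qed.

Lemma bcnt_le m v k : v < 2 * m + 1 -> bcnt m v k <= m.
Proof. move=> hv; rewrite /bcnt /=; repeat (case: ifP => ?); lia. Qed.

Lemma ccnt_le n v k : 3 <= n -> v < n -> ccnt n v k <= uphalf n.-1.
Proof.
move=> n3 vn; rewrite /ccnt; case on: (odd n).
  have E := @hm_odd n on; have := @bcnt_le (hm n) v k.
  move: (hm n) E => m E; lia.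
have on' : ~~ odd n by rewrite on.
have [E m1] := @hm_even n on' n3.
case: ifP => hv.
  rewrite /wcnt; move: (hm n) E m1 => m E m1; repeat (case: ifP => ?); lia.
have := @bcnt_le (hm n) v k.
move: (hm n) E m1 => m E m1; case: (wc m v == k); lia.
Qed.

Lemma deg_Kn n (v : 'I_n) : deg (@Kn_adj n) v = n.-1.
Proof.
rewrite /deg /Kn_adj.
have -> : [set u | v != u] = [set~ v] by apply/setP => u; rewrite !inE eq_sym.
by rewrite cardsC1 card_ord.
Qed.

Lemma sum_card (T : finType) (P Q : pred T) :
  \sum_(u | P u) (Q u : nat) = #|[set u | P u & Q u]|.
Proof.
rewrite -sum1dep_card big_mkcondr /=; apply: eq_bigr => u _; by case: (Q u).
Qed.

Lemma col_sym n u v : u != v -> col n u v = col n v u.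
Proof.
move=> uv; rewrite /col /bs addnC; case: (odd n) => //.
case: eqP => [Eu|]; case: eqP => [Ev|] //.
by move: uv; rewrite Eu Ev eqxx.
Qed.

Lemma lower n j : 3 <= n -> j < 3 -> ~ has_qm_nsd_coloring (@Kn_adj n) j.
Proof.
move=> n3 j3 [c [hc hq hn]].
have key : forall v : 'I_n, exists x, sigma (@Kn_adj n) c v = n.-1 + x /\
     n.-1 - uphalf n.-1 <= x <= uphalf n.-1.
  move=> v; exists #|[set u | Kn_adj v u & c v u == 2]|.
  have h1 := hq v 1; have h2 := hq v 2; rewrite deg_Kn in h1 h2.
  have Hs : sigma (@Kn_adj n) c v = \sum_(u | Kn_adj v u) ((c v u == 1 : nat) + 2 * (c v u == 2 : nat)).
    apply: eq_bigr => u huv; have [_ a b] := hc v u huv; lia.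
  have Hd : n.-1 = \sum_(u | Kn_adj v u) ((c v u == 1 : nat) + (c v u == 2 : nat)).
    rewrite -(@deg_Kn n v) /deg -sum1dep_card; apply: eq_bigr => u huv.
    have [_ a b] := hc v u huv; lia.
  rewrite big_split /= -big_distrr /= !sum_card in Hs Hd.
  rewrite big_split /= !sum_card in Hd.
  lia.
have n0 : 0 < n by lia.
have n1 : 1 < n by lia.
have n2 : 2 < n by lia.
have [x0 [e0 b0]] := key (Ordinal n0).
have [x1 [e1 b1]] := key (Ordinal n1).
have [x2 [e2 b2]] := key (Ordinal n2).
have d01 := @hn (Ordinal n0) (Ordinal n1) isT.
have d02 := @hn (Ordinal n0) (Ordinal n2) isT.
have d12 := @hn (Ordinal n1) (Ordinal n2) isT.
rewrite e0 e1 e2 in d01 d02 d12.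
lia.
Qed.

Theorem mainTheorem4 (n : nat) : 3 <= n -> chi_qm_sigma_eq (@Kn_adj n) 3.
Proof.
move=> n3; split; last by move=> j j3; exact: lower.
exists (fun x y : 'I_n => col n x y); split.
- move=> u v huv; split; first exact: col_sym.
  + by have := col_rng n u v; case/andP.
  + by have := col_rng n u v; case/andP.
- move=> v k.
  rewrite (@card_Kn n v (fun u : nat => col n v u == k)) cnt_col // deg_Kn.
  exact: ccnt_le.
- move=> u v huv.
  rewrite !(@sigma_Kn n (col n)) !sig_col //.
  by apply/eqP; apply: S_inj.
Qed.
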